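(* Let $k,r,h$ be positive integers such that $\ell=\frac{k+h}{r}$ is an integer. Let $m$ be the smallest integer such that $r\mid m$ and $\ell\le 2^m$. Then there exists a maximally recoverable local $(k,r,h)$-code over the field $\mathbb{F}_{2^t}$, where $t=r+m\left\lceil (h-1)\left(1-\frac{1}{2^r}\right)\right\rceil$.
   Context: For positive integers $k,r,h$ with $r\mid(k+h)$, a local $(k,r,h)$-code over a finite field $\mathbb{F}$ is a linear systematic code of dimension $k$ and length $k+h+\frac{k+h}{r}$ consisting of $k$ data symbols, $h$ heavy parity symbols (each a fixed $\mathbb{F}$-linear combination of all data symbols), and, after partitioning the $k+h$ data and heavy parity symbols into $\frac{k+h}{r}$ groups of size $r$, one local parity per group equal to the sum (XOR) of the group's symbols. A local group is such a group together with its local parity. The code is maximally recoverable if for every set $E$ of coordinates containing exactly one coordinate from each local group, puncturing the code in $E$ (deleting those coordinates) yields a maximum distance separable $[k+h,k]$ code (minimum distance $h+1$). *)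

(* Defs.v *)
From HB Require Import structures.
From mathcomp Require Import all_boot all_order all_algebra.
Set Implicit Arguments. Unset Strict Implicit. Unset Printing Implicit Defensive.
Import GRing.Theory.
Local Open Scope ring_scope.

(* ceil (a / b) on naturals, for b > 0 *)
Definition ceil_div (a b : nat) : nat := ((a + b).-1 %/ b)%N.

Section LocalCodes.
Variables (F : fieldType) (k h l : nat).

(* Coordinates of a local (k,r,h)-code: the k+h data/heavy-parity symbols
   (inl i; the first k are the data symbols, the last h the heavy parities)
   and the l local parities (inr j). *)
Definition coord := ('I_(k + h) + 'I_l)%type.

Definition data_heavy (A : 'M[F]_(k, h)) (x : 'rV[F]_k) : 'rV[F]_(k + h) :=
  row_mx x (x *m A).

(* the encoding map (codeword of message x); g assigns each of the k+h
   symbols to its group, the local parity of group j is the sum of its symbols *)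
Definition enc (A : 'M[F]_(k, h)) (g : 'I_(k + h) -> 'I_l) (x : 'rV[F]_k)
  (c : coord) : F :=
  match c with
  | inl i => data_heavy A x 0 i
  | inr j => \sum_(i | g i == j) data_heavy A x 0 i
  end.

Definition groups_of_size (r : nat) (g : 'I_(k + h) -> 'I_l) : Prop :=
  forall j : 'I_l, #|[set i | g i == j]| = r.

Definition local_group (g : 'I_(k + h) -> 'I_l) (j : 'I_l) : {set coord} :=
  [set c | match c with inl i => g i == j | inr j' => j' == j end].

Definition punct_weight A g (E : {set coord}) (x : 'rV[F]_k) : nat :=
  #|[set c | (c \notin E) && (enc A g x c != 0)]|.

(* The code punctured in E is an MDS [k+h, k] code: it has length k+h,
   dimension k (the punctured encoder is injective) and minimum distance
   (at least, hence by the Singleton bound exactly) h+1. *)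
Definition punctured_MDS A g (E : {set coord}) : Prop :=
  [/\ #|~: E| = (k + h)%N,
      (forall x y, (forall c, c \notin E -> enc A g x c = enc A g y c) -> x = y) &
      (forall x, x != 0 -> (h + 1 <= punct_weight A g E x)%N)].

Definition max_recoverable A g : Prop :=
  forall E : {set coord},
    (forall j : 'I_l, #|E :&: local_group g j| = 1%N) -> punctured_MDS A g E.

End LocalCodes.

(* Main.v *)
Require Import Defs.
From HB Require Import structures.
From mathcomp Require Import all_boot all_order all_algebra all_field.
From mathcomp Require Import zify.
From mathcomp Require Import cyclic.
Require Import Defs.
Local Open Scope ring_scope.

Module Helpers.
Set Implicit Arguments. Unset Strict Implicit. Unset Printing Implicit Defensive.
Import GRing.Theory.


Section Char2.
Variable R : comNzRingType.
Hypothesis ch : (2 \in [pchar R])%N.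

Lemma frobD n (x y : R) : (x + y) ^+ (2 ^ n) = x ^+ (2 ^ n) + y ^+ (2 ^ n).
Proof.
apply: exprDn_pchar; rewrite pnatX; apply/orP; left.
by rewrite pnatE // inE.
Qed.

Lemma frob0 n : (0 : R) ^+ (2 ^ n) = 0.
Proof. by rewrite expr0n expn_eq0. Qed.

Lemma frobB n (x y : R) : (x - y) ^+ (2 ^ n) = x ^+ (2 ^ n) - y ^+ (2 ^ n).
Proof. by rewrite !(GRing.subr_pchar2 ch) frobD. Qed.

Lemma frob_sum n (I : Type) (s : seq I) (P : pred I) (f : I -> R) :
  (\sum_(i <- s | P i) f i) ^+ (2 ^ n) = \sum_(i <- s | P i) f i ^+ (2 ^ n).
Proof.
by apply: (big_morph (fun x => x ^+ (2 ^ n))); [exact: frobD | exact: frob0].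
Qed.

End Char2.

Section Moore.
Variable F : fieldType.
Hypothesis ch : (2 \in [pchar F])%N.

Lemma subset_sum_inj s (g : 'I_s -> F) :
  (forall I : {set 'I_s}, I != set0 -> \sum_(i in I) g i != 0) ->
  injective (fun I : {set 'I_s} => \sum_(i in I) g i).
Proof.
move=> indep I J /= eIJ; apply/eqP; apply: contraT => nIJ.
pose D := (I :\: J) :|: (J :\: I).
have nD : D != set0.
  apply: contra nIJ => /eqP D0; rewrite eqEsubset; apply/andP; split.
    apply/subsetP => x xI; apply: contraT => xJ.
    have : x \in D by rewrite !inE xI xJ.
    by rewrite D0 inE.
  apply/subsetP => x xJ; apply: contraT => xI.
  have : x \in D by rewrite !inE xI xJ.
    by rewrite D0 inE.
have := indep D nD; rewrite (big_mkcond (fun i => i \in D)).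
suff -> : \sum_i (if i \in D then g i else 0) =
          \sum_(i in I) g i - \sum_(i in J) g i by rewrite eIJ subrr eqxx.
rewrite (big_mkcond (fun i => i \in I)) (big_mkcond (fun i => i \in J)).
rewrite -sumrB; apply: eq_bigr => i _; rewrite !inE.
by case: (i \in I); case: (i \in J) => /=; rewrite ?subrr ?subr0 ?sub0r ?(oppr_pchar2 ch).
Qed.

Lemma moore s h (g c : 'I_s -> F) :
  (s <= h)%N ->
  (forall I : {set 'I_s}, I != set0 -> \sum_(i in I) g i != 0) ->
  (forall j, (j < h)%N -> \sum_i c i * g i ^+ (2 ^ j) = 0) ->
  forall i, c i = 0.
Proof.
move=> sh indep hc i0; apply: contraTeq isT => ci0.
pose M := \matrix_(i < s, j < s) g i ^+ (2 ^ j).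
have cM : (\row_i c i) *m M = 0.
  apply/rowP => j; rewrite !mxE; rewrite -[RHS](hc j); last first.
    by apply: leq_trans sh.
  by apply: eq_bigr => i _; rewrite !mxE.
have dM : \det M == 0.
  apply/det0P; exists (\row_i c i) => //.
  by apply: contra ci0 => /eqP /rowP /(_ i0); rewrite !mxE => ->.
have /det0P [a a0 aM] : \det M^T == 0 by rewrite det_tr.
have ha : forall i, \sum_(j < s) a 0 j * g i ^+ (2 ^ j) = 0.
  move=> i; move/rowP: aM => /(_ i); rewrite !mxE => H; rewrite -[RHS]H.
  by apply: eq_bigr => j _; rewrite !mxE.
pose P := \sum_(j < s) a 0 j *: 'X^(2 ^ j) : {poly F}.
have coefP k : P`_k = \sum_(j < s) a 0 j * (k == (2 ^ j)%N)%:R.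
  by rewrite coef_sum; apply: eq_bigr => j _; rewrite coefZ coefXn.
have [j0 aj0] : exists j0, a 0 j0 != 0.
  apply/existsP; apply: contraR a0 => /existsPn H; apply/eqP/rowP => j.
  by rewrite mxE; apply/eqP; move: (H j); rewrite negbK.
have P0 : P != 0.
  apply/eqP => /(congr1 (fun p : {poly F} => p`_(2 ^ j0)%N)).
  rewrite coefP coef0 (bigD1 j0) //= eqxx mulr1 big1 ?addr0.
    by move/eqP; rewrite (negbTE aj0).
  move=> j nj; rewrite eqn_exp2l // -[_ == _]/(j0 == j) eq_sym.
  by rewrite (negbTE nj) mulr0.
have s0 : (0 < s)%N by apply: leq_ltn_trans (ltn_ord i0).
have sP : (size P <= (2 ^ s.-1).+1)%N.
  apply/leq_sizeP => k hk; rewrite coefP big1 // => j _.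
  suff -> : (k == 2 ^ j)%N = false by rewrite mulr0.
  apply/negbTE; rewrite neq_ltn; apply/orP; right.
  apply: leq_trans hk; rewrite ltnS leq_exp2l //.
  by rewrite -ltnS prednK.
pose rs := [seq \sum_(i in Z) g i | Z : {set 'I_s} <- enum (powerset [set: 'I_s])].
have urs : uniq rs.
  rewrite map_inj_uniq ?enum_uniq //; exact: subset_sum_inj.
have rrs : all (root P) rs.
  apply/allP => x /mapP [S _ ->]; rewrite /root horner_sum.
  rewrite (eq_bigr (fun j => a 0 j * \sum_(i in S) g i ^+ (2 ^ j))); last first.
    by move=> j _; rewrite hornerZ hornerXn (frob_sum ch).
  rewrite (eq_bigr (fun j => \sum_(i in S) a 0 j * g i ^+ (2 ^ j))); last first.
    by move=> j _; rewrite mulr_sumr.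
  rewrite exchange_big /= big1 // => i _; exact: ha.
have := max_poly_roots P0 rrs urs.
rewrite size_map -cardE card_powerset cardsT card_ord => hlt.
have := leq_trans hlt sP; rewrite ltnS.
rewrite -{1}(prednK s0) expnS.
case: (2 ^ s.-1)%N (expn_gt0 2 s.-1) => // n _; rewrite mul2n -addnn.
move=> H; exfalso; lia.
Qed.

End Moore.


Section Reduction.
Variable F : fieldType.
Hypothesis ch : (2 \in [pchar F])%N.
Variables (k h l : nat) (g : 'I_(k + h) -> 'I_l) (beta : 'I_(k + h) -> F).

Definition grp (c : coord k h l) : 'I_l :=
  match c with inl i => g i | inr j => j end.
Definition bt (c : coord k h l) : F :=
  match c with inl i => beta i | inr _ => 0 end.

Lemma inLG c j : (c \in local_group g j) = (grp c == j).
Proof. by rewrite inE; case: c. Qed.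

Definition DP := forall (I : {set coord k h l}) (e : 'I_l -> coord k h l),
  I != set0 -> (#|I| <= h)%N -> (forall j, e j \in local_group g j) ->
  (forall j, e j \notin I) ->
  \sum_(c in I) (bt c - bt (e (grp c))) != 0.

Hypothesis dp : DP.

Definition Bm : 'M[F]_(k + h, h) := \matrix_(i, j) beta i ^+ (2 ^ j).
Definition BH := dsubmx Bm.
Definition BD := usubmx Bm.
Definition Am := - (BD *m invmx BH).

Lemma BH_unit : BH \in unitmx.
Proof.
rewrite unitmxE unitfE; apply/negP => /det0P [v v0 vB].
have hv : forall j, (j < h)%N -> \sum_i v 0 i * beta (rshift k i) ^+ (2 ^ j) = 0.
  move=> j jh; move/rowP: vB => /(_ (Ordinal jh)); rewrite !mxE => H.
  rewrite -[RHS]H; apply: eq_bigr => i _; by rewrite !mxE.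
have ind : forall I : {set 'I_h}, I != set0 -> \sum_(i in I) beta (rshift k i) != 0.
  move=> I I0.
  pose J := [set (inl (rshift k i) : coord k h l) | i in I].
  have injf : injective (fun i : 'I_h => (inl (rshift k i) : coord k h l)).
    by move=> a b [] /addnI /val_inj.
  have := dp (I := J) (e := fun j => inr j).
  rewrite big_imset /=; last by move=> a b _ _; apply: injf.
  rewrite (eq_bigr (fun i => beta (rshift k i))); last by move=> i _; rewrite subr0.
  apply.
  - by rewrite imset_eq0.
  - by rewrite card_imset // -[X in (_ <= X)%N](card_ord h) max_card.
  - by move=> j; rewrite inLG.
  - by move=> j; apply/imsetP => [[i _]].
have := moore ch (leqnn h) ind hv => v00.
by move/eqP: v0; apply; apply/rowP => i; rewrite mxE v00.
Qed.

Lemma heavy_check x j : (j < h)%N ->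
  \sum_i data_heavy Am x 0 i * beta i ^+ (2 ^ j) = 0.
Proof.
move=> jh.
have : data_heavy Am x *m Bm = 0.
  rewrite /data_heavy -[Bm]vsubmxK mul_row_col /Am mulmxN mulmxA.
  by rewrite -/BD -/BH mulNmx mulmxKV ?BH_unit // addrN.
move/rowP => /(_ (Ordinal jh)).
rewrite !mxE => H; rewrite -[RHS]H.
by apply: eq_bigr => i _; rewrite /Bm mxE.
Qed.


Lemma sum_coord (f : coord k h l -> F) :
  \sum_(c : coord k h l) f c = \sum_i f (inl i) + \sum_j f (inr j).
Proof. exact: big_sumType. Qed.

Lemma W1 x j : (j < h)%N ->
  \sum_(c : coord k h l) bt c ^+ (2 ^ j) * enc Am g x c = 0.
Proof.
move=> jh; rewrite sum_coord /= [X in _ + X]big1 ?addr0; last first.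
  by move=> i _ /=; rewrite expr0n expn_eq0 mul0r.
rewrite -[RHS](heavy_check x jh); apply: eq_bigr => i _; exact: mulrC.
Qed.

Lemma W2 x jj :
  \sum_(c : coord k h l | grp c == jj) enc Am g x c = 0.
Proof.
rewrite (big_sumType _ (fun c => grp c == jj)) /= big_pred1_eq.
exact: (addrr_pchar2 ch).
Qed.

Lemma W3 x (b : 'I_l -> F) :
  \sum_(c : coord k h l) b (grp c) * enc Am g x c = 0.
Proof.
rewrite (partition_big grp predT) //= big1 // => jj _.
rewrite (eq_bigr (fun c => b jj * enc Am g x c)); last by move=> c /eqP ->.
by rewrite -mulr_sumr W2 mulr0.
Qed.

Lemma enc_sub x y c : enc Am g (x - y) c = enc Am g x c - enc Am g y c.
Proof.
have dh : data_heavy Am (x - y) = data_heavy Am x - data_heavy Am y.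
  by rewrite /data_heavy mulmxBl opp_row_mx add_row_mx.
case: c => [i|j] /=; first by rewrite dh !mxE.
rewrite -sumrB; apply: eq_bigr => i _; by rewrite dh !mxE.
Qed.

Section OneE.
Variable E : {set coord k h l}.
Hypothesis hE : forall j : 'I_l, #|E :&: local_group g j| = 1%N.

Definition eE (j : 'I_l) : coord k h l :=
  odflt (inr j) [pick c in E :&: local_group g j].

Lemma eE_spec j : eE j \in E :&: local_group g j.
Proof.
rewrite /eE; case: pickP => [c -> //| H].
by have := hE j; rewrite (eq_card0 H).
Qed.

Lemma eE_uniq c : c \in E -> eE (grp c) = c.
Proof.
move=> cE; have /eqP/cards1P [c0 Hc0] := hE (grp c).
have := eE_spec (grp c); rewrite Hc0 inE => /eqP ->.
have : c \in E :&: local_group g (grp c) by rewrite in_setI cE inLG eqxx.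
by rewrite Hc0 inE => /eqP ->.
Qed.

Lemma weight_zero x : (punct_weight Am g E x <= h)%N -> x = 0.
Proof.
move=> hw.
pose w := enc Am g x.
pose gam c := bt c - bt (eE (grp c)).
have gamE c : c \in E -> gam c = 0 by move=> cE; rewrite /gam eE_uniq ?subrr.
pose T := [set c | (c \notin E) && (w c != 0)].
have cT : (#|T| <= h)%N by [].
have key j : (j < h)%N -> \sum_(c in T) gam c ^+ (2 ^ j) * w c = 0.
  move=> jh; rewrite big_mkcond /=.
  rewrite (eq_bigr (fun c => gam c ^+ (2 ^ j) * w c)); last first.
    move=> c _; rewrite inE; case: ifP => // /negbT.
    rewrite negb_and !negbK; case/orP => [/gamE -> | /eqP ->].
      by rewrite frob0 mul0r.
    by rewrite mulr0.
  rewrite /gam (eq_bigr (fun c => bt c ^+ (2 ^ j) * w c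
     - (fun jj => bt (eE jj) ^+ (2 ^ j)) (grp c) * w c)); last first.
    by move=> c _; rewrite (frobB ch) mulrBl.
  by rewrite sumrB W1 // (W3 x (fun jj => bt (eE jj) ^+ (2 ^ j))) subrr.
have wnE c : c \notin E -> w c = 0.
  move=> cnE; apply: contraTeq isT => wc0.
  have cT' : c \in T by rewrite inE cnE wc0.
  have := @moore F ch #|T| h (fun i => gam (enum_val i)) (fun i => w (enum_val i)) cT.
  move=> /(_ _ _ (enum_rank_in cT' c)); rewrite enum_rankK_in // => H.
  suff : w c = 0 by move/eqP: wc0.
  apply: H.
    move=> Z Z0; pose I := [set enum_val i | i in Z].
    have sIT : I \subset T by apply/subsetP => c' /imsetP [i _ ->]; exact: enum_valP.
    have := dp (I := I) (e := eE).
    rewrite big_imset /=; last by move=> a b _ _; apply: enum_val_inj.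
    apply.
    - by rewrite imset_eq0.
    - by apply: leq_trans cT; exact: subset_leq_card.
    - by move=> j; have := eE_spec j; rewrite inE => /andP [].
    - move=> j; apply/negP => /(subsetP sIT); rewrite inE.
      by have := eE_spec j; rewrite inE => /andP [-> _].
  move=> j jh; rewrite -[RHS](key j jh) [RHS]big_enum_val /=.
  by apply: eq_bigr => i _; rewrite mulrC.
have wE c : c \in E -> w c = 0.
  move=> cE; have := W2 x (grp c); rewrite (bigD1 c) //= big1 ?addr0 //.
  move=> c' /andP [/eqP gc' nc']; apply: wnE; apply: contra nc' => c'E.
  by rewrite -(eE_uniq c'E) -(eE_uniq cE) gc'.
have w0 c : w c = 0 by case: (boolP (c \in E)) => [/wE|/wnE].
have dh0 : data_heavy Am x = 0.
  by apply/rowP => i; rewrite [RHS]mxE; exact: (w0 (inl i)).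
by have := congr1 lsubmx dh0; rewrite /data_heavy row_mxKl linear0.
Qed.

Lemma card_E : #|E| = l.
Proof.
rewrite -sum1_card (partition_big grp predT) //=.
rewrite (eq_bigr (fun _ => 1%N)) ?sum1_card ?card_ord // => j _.
rewrite -[RHS](hE j) -sum1_card; apply: eq_bigl => c.
by rewrite inE inLG.
Qed.

Lemma punctured_ok : punctured_MDS Am g E.
Proof.
split.
- have := cardsC E; rewrite card_E card_sum !card_ord => H.
  by apply/eqP; rewrite -(eqn_add2l l) H addnC.
- move=> x y hxy; apply/eqP; rewrite -subr_eq0; apply/eqP; apply: weight_zero.
  rewrite /punct_weight; apply: leq_trans (leq0n h); rewrite leqn0 cards_eq0.
  apply/eqP/setP => c; rewrite !inE enc_sub; case: (boolP (c \in E)) => //= cE.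
  by rewrite hxy // subrr eqxx.
- move=> x x0; rewrite addn1 ltnNge; apply: contra x0 => /weight_zero ->.
  exact: eqxx.
Qed.

End OneE.

Lemma MR : max_recoverable Am g.
Proof. by move=> E hE; apply: punctured_ok. Qed.

End Reduction.


Section KVan.
Variable K : fieldType.
Variable q : nat.
Hypothesis q1 : (1 < q)%N.
Hypothesis frobq : forall a b : K, (a + b) ^+ q = a ^+ q + b ^+ q.
Variables (l h : nat) (al : 'I_l -> K).
Hypothesis alinj : injective al.

Lemma frobq_sum (s : seq 'I_l) (f : 'I_l -> K) :
  (\sum_(i <- s) f i) ^+ q = \sum_(i <- s) f i ^+ q.
Proof.
apply: (big_morph (fun x => x ^+ q)); first exact: frobq.
by rewrite expr0n; case: q q1.
Qed.

Lemma van (x : 'I_l -> K) :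
  (#|[set g | x g != 0%R]| <= h)%N ->
  (forall j, (j < h)%N -> \sum_g x g * al g ^+ j = 0) ->
  forall g, x g = 0.
Proof.
move=> hs hj g0; apply/eqP; apply: contraT => xg0.
pose S' := [set g | x g != 0%R] :\ g0.
pose P := \prod_(g <- enum S') ('X - (al g)%:P).
have sP : (size P <= h)%N.
  rewrite size_prod_XsubC -cardE; apply: leq_trans hs.
  rewrite (cardsD1 g0 [set g | x g != 0%R]) inE xg0 /=.
  by rewrite /S' setDE setIC.
have : \sum_g x g * P.[al g] = 0.
  rewrite (eq_bigr (fun g => \sum_(i < size P) P`_i * (x g * al g ^+ i))); last first.
    move=> g _; rewrite horner_coef mulr_sumr; apply: eq_bigr => i _.
    by rewrite mulrCA.
  rewrite exchange_big /= big1 // => i _.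
  by rewrite -mulr_sumr hj ?mulr0 // (leq_trans (ltn_ord i) sP).
rewrite (bigD1 g0) //= big1 ?addr0; last first.
  move=> g ng; case: (eqVneq (x g) 0) => [-> | xg]; first by rewrite mul0r.
  have : root P (al g).
    rewrite /P -(big_map al xpredT (fun a => 'X - a%:P)) root_prod_XsubC; apply: map_f; rewrite mem_enum /S' !inE ng.
    exact: xg.
  by move/eqP => ->; rewrite mulr0.
move=> H; suff : x g0 * P.[al g0] != 0 by rewrite H eqxx.
rewrite mulf_eq0 negb_or xg0 /= horner_prod.
rewrite prodf_seq_neq0; apply/allP => g; rewrite mem_enum !inE => /andP [ng _].
by rewrite !hornerE subr_eq0 (inj_eq alinj) eq_sym.
Qed.

Lemma frob_clos (x : 'I_l -> K) :
  (forall g, x g ^+ q = x g) ->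
  \sum_g x g = 0 ->
  (forall j, (0 < j < h)%N -> ~~ (q %| j)%N -> \sum_g x g * al g ^+ j = 0) ->
  forall j, (j < h)%N -> \sum_g x g * al g ^+ j = 0.
Proof.
move=> xq s0 sJ j; elim/ltn_ind: j => j IH jh.
case: (posnP j) => [-> | j0].
  by rewrite -[RHS]s0; apply: eq_bigr => g _; rewrite expr0 mulr1.
case: (boolP (q %| j)%N) => qj; last by apply: sJ => //; rewrite j0.
have jE : j = (j %/ q * q)%N by rewrite divnK.
have lt : (j %/ q < j)%N by rewrite ltn_Pdiv //; lia.
rewrite jE (eq_bigr (fun g => (x g * al g ^+ (j %/ q)) ^+ q)); last first.
  by move=> g _; rewrite exprMn xq exprM.
rewrite -frobq_sum IH ?expr0n //; first by case: q q1.
by apply: ltn_trans jh.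
Qed.

Lemma Kmain (x : 'I_l -> K) :
  (forall g, x g ^+ q = x g) ->
  (#|[set g | x g != 0%R]| <= h)%N ->
  \sum_g x g = 0 ->
  (forall j, (0 < j < h)%N -> ~~ (q %| j)%N -> \sum_g x g * al g ^+ j = 0) ->
  forall g, x g = 0.
Proof.
move=> xq hs s0 sJ; apply: van hs _; exact: frob_clos.
Qed.

End KVan.

Module P4m.
Import VectorInternalTheory.

Lemma dvd_pow_sub1 a e : (0 < a)%N -> (a - 1 %| a ^ e - 1)%N.
Proof.
move=> a0; rewrite -eqn_mod_dvd ?expn_gt0 ?a0 //.
rewrite -modnXm.
have -> : (a %% (a - 1) = 1 %% (a - 1))%N.
  by rewrite -{1}(subnK a0) modnDl.
by rewrite modnXm exp1n.
Qed.

Lemma fixed_count (K : finFieldType) r m :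
  (0 < r)%N -> (r %| m)%N -> #|K| = (2 ^ m)%N ->
  (2 ^ r <= #|[pred x : K | x ^+ (2 ^ r) == x]|)%N.
Proof.
move=> r0 rm cK.
have m0 : (0 < m)%N.
  case: (posnP m) => // m0; move: cK; rewrite m0 expn0 => cK.
  by have := finNzRing_gt1 K; rewrite cK.
pose N := (2 ^ m - 1)%N; pose M := (2 ^ r - 1)%N.
have N0 : (0 < N)%N by rewrite /N subn_gt0 -{1}(expn0 2) ltn_exp2l.
have M0 : (0 < M)%N by rewrite /M subn_gt0 -{1}(expn0 2) ltn_exp2l.
have MN : (M %| N)%N.
  by rewrite /N /M -(divnK rm) mulnC expnM dvd_pow_sub1 // expn_gt0.
pose rs := enum (predC1 (0 : K)).
have urs : uniq rs by rewrite enum_uniq.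
have srs : size rs = N.
  by rewrite -cardE cardC1 /N -cK subn1.
have ars : all N.-unity_root rs.
  apply/allP => x; rewrite mem_enum inE => x0.
  rewrite unity_rootE; apply/eqP; apply: (mulIf x0); rewrite mul1r -exprSr.
  by rewrite /N subn1 prednK ?expn_gt0 // -cK expf_card.
have := has_prim_root N0 ars urs; rewrite srs leqnn => /(_ isT) /hasP [z _ pz].
have pw := dvdn_prim_root pz MN.
set w := z ^+ (N %/ M) in pw.
pose L := 0 :: [seq w ^+ i | i <- iota 0 M].
have uL : uniq L.
  rewrite /= map_inj_in_uniq ?iota_uniq; last first.
    move=> i j; rewrite !mem_iota !add0n => iM jM /eqP.
    by rewrite (eq_prim_root_expr pw) !modn_small // => /eqP.
  rewrite andbT; apply/mapP => [[i _ /esym /eqP]].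
  by rewrite expf_eq0 (prim_root_eq0 pw) (gtn_eqF M0) andbF.
have sL : size L = (2 ^ r)%N by rewrite /= size_map size_iota /M subn1 prednK ?expn_gt0.
rewrite -{1}sL -(card_uniqP uL); apply: subset_leq_card; apply/subsetP => x.
rewrite inE /= inE => /orP [/eqP -> | /mapP [i _ ->]].
  by rewrite expr0n expn_eq0.
rewrite -exprM mulnC exprM.
have -> : (2 ^ r = M + 1)%N by rewrite /M subnK ?expn_gt0.
by rewrite exprD (prim_expr_order pw) mul1r expr1.
Qed.

Lemma ell_exists (K : finFieldType) r m :
  (0 < r)%N -> (r %| m)%N -> #|K| = (2 ^ m)%N ->
  exists ell : 'rV['F_2]_r -> K,
    [/\ injective ell, (forall a b, ell (a + b) = ell a + ell b) &
        (forall b, ell b ^+ (2 ^ r) = ell b)].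
Proof.
move=> r0 rm cK.
move: r0 rm; case: r => [//|r'] r0 rm.
set r := r'.+1 in r0 rm *.
have ch : (2 \in [pchar K])%N by apply: (card_finPcharP cK).
pose q := (2 ^ r)%N.
have q0 : (0 < q)%N by rewrite expn_gt0.
pose KK := pPrimeCharType ch.
have frD (a b : K) : (a + b) ^+ q = a ^+ q + b ^+ q.
  apply: exprDn_pchar; rewrite pnatX; apply/orP; left; by rewrite pnatE // inE.
have scE (c : 'F_2) (x : KK) : ((c *: x : KK) : K) = (c : nat)%:R * (x : K) by [].
have fix_lin n (X : n.-tuple KK) (c : 'I_n -> 'F_2) :
    (forall i : 'I_n, (X`_i : K) ^+ q = X`_i) ->
    ((\sum_i c i *: X`_i : KK) : K) ^+ q = (\sum_i c i *: X`_i : KK).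
  move=> hX.
  have -> : ((\sum_i c i *: X`_i : KK) : K) = \sum_i ((c i : nat)%:R * (X`_i : K)).
    by [].
  rewrite (big_morph (fun x : K => x ^+ q) frD (id1 := 0)); last by rewrite expr0n gtn_eqF.
  apply: eq_bigr => i _; rewrite exprMn hX; congr (_ * _).
  by case: (c i) => [[|[|]]] //= _; rewrite ?expr0n ?gtn_eqF ?expr1n.
pose fx := [pred x : K | x ^+ q == x].
pose V : {vspace KK} := <<(enum fx : seq KK)>>%VS.
have Vfix v : v \in V -> ((v : K) ^+ q = v).
  move=> vV; rewrite (@coord_span _ _ _ (in_tuple (enum fx : seq KK)) v vV).
  apply: fix_lin => i.
  apply/eqP; have : (in_tuple (enum fx : seq KK))`_i \in enum fx.
    by apply: mem_nth; exact: ltn_ord.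
  by rewrite mem_enum.
have dV : (r <= \dim V)%N.
  rewrite -(@leq_exp2l 2) // -{1}/q.
  apply: leq_trans (fixed_count r0 rm cK) _.
  have := card_vspace V; rewrite card_Fp // => <-.
  apply: subset_leq_card; apply/subsetP => x xf.
  by apply: memv_span; rewrite mem_enum.
pose X := vbasis V.
have Xfree : free X := basis_free (vbasisP V).
pose ell (b : 'rV['F_2]_r) : K := (\sum_(p < r) b 0 p *: X`_p : KK).
have ellD a b : ell (a + b) = ell a + ell b.
  rewrite /ell -big_split /=; apply: eq_bigr => p _.
  by rewrite mxE scalerDl.
have ellB a b : ell (a - b) = ell a - ell b.
  rewrite /ell -sumrB /=; apply: eq_bigr => p _.
  by rewrite !mxE scalerBl.
exists ell; split => //; last first.
  move=> b; apply: Vfix; apply: memv_suml => p _; apply: memvZ.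
  by apply: vbasis_mem; apply: mem_nth; rewrite size_tuple (leq_trans (ltn_ord p) dV).
move=> a b eab; apply/eqP; rewrite -subr_eq0; apply/eqP.
move: eab => /eqP; rewrite -subr_eq0 -ellB; move: (a - b) => c /eqP c0.
pose G (j : nat) : KK := (if (j < r)%N then c 0 (inord j) else 0) *: X`_j.
have k0 := ((elimT freeP Xfree) (fun i : 'I_(\dim V) => if (i < r)%N then c 0 (inord i) else 0)).
apply/rowP => p; rewrite mxE.
have := k0 _ (widen_ord dV p); rewrite /= ltn_ord inord_val; apply.
rewrite -(big_mkord xpredT G).
have -> : \sum_(0 <= i < \dim V) G i = \sum_(i < \dim V | (i < r)%N) G i.
  rewrite big_mkord [RHS]big_mkcond /=; apply: eq_bigr => i _.
  by rewrite /G; case: ifP => // _; rewrite scale0r.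
rewrite -big_ord_widen //; transitivity (ell c : KK); last exact: c0.
apply: eq_bigr => i _.
by rewrite /G ltn_ord inord_val.
Qed.
Lemma embedF (F : finFieldType) n : #|F| = (2 ^ n)%N ->
  exists f : 'rV['F_2]_n -> F, injective f /\ (forall a b, f (a + b) = f a + f b).
Proof.
move=> cF; have ch : (2 \in [pchar F])%N by apply: (card_finPcharP cF).
have dm : n = dim (pPrimeCharType ch).
  rewrite -dimvf pprimeChar_dimf.
  by rewrite [#|_|]cF pfactorK.
subst n.
exists (fun u => (r2v u : pPrimeCharType ch) : F); split.
  exact: r2v_inj.
by move=> a b /=; rewrite raddfD.
Qed.

Lemma embedK (F : finFieldType) n : #|F| = (2 ^ n)%N ->
  exists f : F -> 'rV['F_2]_n, injective f /\ (forall a b, f (a + b) = f a + f b).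
Proof.
move=> cF; have ch : (2 \in [pchar F])%N by apply: (card_finPcharP cF).
have dm : n = dim (pPrimeCharType ch).
  rewrite -dimvf pprimeChar_dimf.
  by rewrite [#|_|]cF pfactorK.
subst n.
exists (fun x : F => v2r (x : pPrimeCharType ch)); split.
  exact: v2r_inj.
by move=> a b /=; rewrite raddfD.
Qed.

End P4m.
Import P4m.


Lemma count_ndvd q n : (0 < q)%N ->
  count (fun j => ~~ (q %| j)%N) (iota 1 n) = (n - n %/ q)%N.
Proof.
move=> q0; elim: n => [|n IH]; first by rewrite div0n.
rewrite -[n.+1]addn1 iotaD count_cat IH /= add1n addn1 divnS // addn0.
have : (n %/ q <= n)%N by apply: leq_div.
case: (q %| n.+1)%N => /=; lia.
Qed.

Lemma count_le_ceil q n : (0 < q)%N ->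
  (n - n %/ q <= ceil_div (n * (q - 1)) q)%N.
Proof.
move=> q0; rewrite /ceil_div leq_divRL //.
have e := divn_eq n q; have lt := ltn_pmod n q0.
set a := (n %/ q)%N in e *; set b := (n %% q)%N in e lt *.
rewrite e; nia.
Qed.

Section AddFun.
Variables (U V : zmodType) (f : U -> V).
Hypothesis fD : forall a b, f (a + b) = f a + f b.
Lemma af0 : f 0 = 0.
Proof. by apply: (addrI (f 0)); rewrite -fD !addr0. Qed.
Lemma af_sum (I : Type) (s : seq I) (P : pred I) (F : I -> U) :
  f (\sum_(i <- s | P i) F i) = \sum_(i <- s | P i) f (F i).
Proof. exact: (big_morph f fD af0). Qed.
Lemma af_inj0 : injective f -> forall a, f a = 0 -> a = 0.
Proof. by move=> fi a; rewrite -af0 => /fi. Qed.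
End AddFun.


Section Bits.
Variables (k h l r : nat) (g : 'I_(k + h) -> 'I_l) (pos : 'I_(k + h) -> 'I_r).
Hypothesis posinj : forall i i', g i = g i' -> pos i = pos i' -> i = i'.

Definition bits (c : coord k h l) : 'rV['F_2]_r :=
  match c with inl i => delta_mx 0 (pos i) | inr _ => 0 end.

Lemma bits_lemma (I : {set coord k h l}) (e : 'I_l -> coord k h l) :
  I != set0 -> (forall j, e j \in local_group g j) -> (forall j, e j \notin I) ->
  exists gg, \sum_(c in I | grp g c == gg) (bits c + bits (e gg)) != 0.
Proof.
move=> I0 eL eI.
case: (pickP [pred i | (inl i : coord k h l) \in I]) => [i0 Hi0 | Hno].
  have {}Hi0 : (inl i0 : coord k h l) \in I := Hi0.
  exists (g i0); set p := pos i0.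
  have bc c : grp g c == g i0 -> c != inl i0 -> bits c 0 p = 0.
    case: c => [i|j] /=; last by rewrite mxE.
    move=> /eqP gi ni; rewrite mxE /=.
    case: eqP => // pe; case/eqP: ni; congr inl; exact: posinj gi (esym pe).
  apply/negP => /eqP /rowP /(_ p); rewrite summxE mxE.
  rewrite (bigD1 (inl i0)) /=; last by rewrite Hi0 eqxx.
  rewrite big1 ?addr0; last first.
    move=> c /andP [/andP [_ gc] nc]; rewrite mxE (bc c gc nc) add0r.
    apply: bc; first by rewrite -inLG.
    by apply: contraNneq (eI (g i0)) => ->.
  rewrite mxE (bc (e (g i0))); first by rewrite mxE /p !eqxx addr0 => /eqP; rewrite oner_eq0.
    by rewrite -inLG.
  by apply: contraNneq (eI (g i0)) => ->.
have [c0 c0I] : exists c0, c0 \in I.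
  by apply/set0Pn.
case: c0 c0I => [i0 | j0] c0I; first by have := Hno i0; rewrite /= c0I.
exists j0; rewrite (bigD1 (inr j0)) /=; last by rewrite c0I eqxx.
rewrite big1 ?addr0 ?add0r; last first.
  move=> c /andP [/andP [cI gc] nc]; case: c cI gc nc => [i | j] cI gc nc.
    by have := Hno i; rewrite /= cI.
  by move: gc nc => /= /eqP ->; rewrite eqxx.
have := eL j0; rewrite inLG; case E: (e j0) => [i|j] /=.
  move=> _; apply/negP => /eqP /rowP /(_ (pos i)); rewrite !mxE !eqxx /=.
  by move/eqP; rewrite oner_eq0.
move=> /eqP ej; have := eI j0; rewrite E ej c0I.
done.
Qed.

End Bits.


Section Design.
Variables (F : fieldType) (ch : (2 \in [pchar F])%N).
Variables (k h l N : nat) (g : 'I_(k + h) -> 'I_l).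
Variable Th : 'rV['F_2]_N -> F.
Hypothesis Thinj : injective Th.
Hypothesis ThD : forall a b, Th (a + b) = Th a + Th b.
Variable v : coord k h l -> 'rV['F_2]_N.
Hypothesis v_inr : forall j, v (inr j) = 0.
Hypothesis VC : forall (I : {set coord k h l}) (e : 'I_l -> coord k h l),
  I != set0 -> (#|I| <= h)%N -> (forall j, e j \in local_group g j) ->
  (forall j, e j \notin I) ->
  \sum_(c in I) (v c + v (e (grp g c))) != 0.

Lemma DP_design : DP g (fun i => Th (v (inl i))).
Proof.
move=> I e I0 Ih eL eI.
have btE c : bt (fun i => Th (v (inl i))) c = Th (v c).
  by case: c => [i|j] //=; rewrite v_inr (af0 ThD).
rewrite (eq_bigr (fun c => Th (v c + v (e (grp g c))))); last first.
  by move=> c _; rewrite !btE (GRing.subr_pchar2 ch) ThD.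
rewrite -(af_sum ThD); apply: contra (VC I0 Ih eL eI) => /eqP H.
by apply/eqP; apply: (af_inj0 ThD Thinj).
Qed.

End Design.

Section VCK.
Variables (k h l r m d : nat) (g : 'I_(k + h) -> 'I_l) (pos : 'I_(k + h) -> 'I_r).
Hypothesis posinj : forall i i', g i = g i' -> pos i = pos i' -> i = i'.
Hypothesis r0 : (0 < r)%N.
Variables (K : fieldType) (chK : (2 \in [pchar K])%N).
Variable ell : 'rV['F_2]_r -> K.
Hypotheses (ellinj : injective ell) (ellD : forall a b, ell (a + b) = ell a + ell b)
  (ellfix : forall b, ell b ^+ (2 ^ r) = ell b).
Variable al : 'I_l -> K.
Hypothesis alinj : injective al.
Variable kap : K -> 'rV['F_2]_m.
Hypotheses (kapinj : injective kap) (kapD : forall a b, kap (a + b) = kap a + kap b).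
Variable js : 'I_d -> nat.
Hypothesis jsP : forall j, (0 < j < h)%N -> ~~ (2 ^ r %| j)%N -> exists jj, js jj = j.

Definition yK (c : coord k h l) (jj : 'I_d) : K :=
  ell (bits pos c) * al (grp g c) ^+ js jj.
Definition MK (c : coord k h l) : 'M['F_2]_(d, m) :=
  \matrix_(jj, p) kap (yK c jj) 0 p.
Definition vK (c : coord k h l) : 'rV['F_2]_(r + d * m) :=
  row_mx (bits pos c) (mxvec (MK c)).

Lemma vK_inr j : vK (inr j) = 0.
Proof.
rewrite /vK /=.
have -> : MK (inr j) = 0.
  apply/matrixP => jj p; rewrite !mxE /yK /= (af0 ellD) mul0r (af0 kapD) mxE.
  done.
by rewrite linear0 row_mx0.
Qed.

Lemma VC_K (I : {set coord k h l}) (e : 'I_l -> coord k h l) :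
  I != set0 -> (#|I| <= h)%N -> (forall j, e j \in local_group g j) ->
  (forall j, e j \notin I) ->
  \sum_(c in I) (vK c + vK (e (grp g c))) != 0.
Proof.
move=> I0 Ih eL eI; apply/negP => /eqP H0.
have ge gg : grp g (e gg) = gg by apply/eqP; rewrite -inLG.
have F1 : \sum_(c in I) (bits pos c + bits pos (e (grp g c))) = 0.
  have := congr1 lsubmx H0; rewrite linear0 linear_sum /= => H; rewrite -[RHS]H.
  by apply: eq_bigr => c _; rewrite linearD /= /vK !row_mxKl.
have F2 jj : \sum_(c in I) (yK c jj + yK (e (grp g c)) jj) = 0.
  have := congr1 (vec_mx \o rsubmx) H0; rewrite /= !linear0 !linear_sum /=.
  move=> H1; apply: (af_inj0 kapD kapinj); rewrite (af_sum kapD).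
  apply/rowP => p; rewrite summxE mxE.
  move/matrixP: H1 => /(_ jj p); rewrite summxE mxE => H2; rewrite -[RHS]H2.
  apply: eq_bigr => c _; rewrite kapD mxE !linearD /= /vK !row_mxKr !mxvecK.
  by rewrite !mxE.
pose u gg := \sum_(c in I | grp g c == gg) (bits pos c + bits pos (e gg)).
have [gg ugg] := bits_lemma posinj I0 eL eI.
suff : forall gg, ell (u gg) = 0.
  move/(_ gg) => /(af_inj0 ellD ellinj) u0.
  by move: ugg; rewrite -/(u gg) u0 eqxx.
have q1 : (1 < 2 ^ r)%N by rewrite -{1}(expn0 2) ltn_exp2l.
have part (V : zmodType) (G : coord k h l -> 'I_l -> V) :
    \sum_(c in I) G c (grp g c) = \sum_gg \sum_(c in I | grp g c == gg) G c gg.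
  rewrite (partition_big (grp g) predT) //=; apply: eq_bigr => j _.
  by apply: eq_bigr => c /andP [_ /eqP ->].
apply: (Kmain q1 (@frobD _ chK r) alinj).
- by move=> gg'; exact: ellfix.
- apply: leq_trans Ih; apply: leq_trans (leq_imset_card (grp g) I).
  apply/subset_leq_card/subsetP => gg'; rewrite inE; apply: contraR => ng.
  rewrite /u big_pred0 ?(af0 ellD) // => c; apply/negP => /andP [cI /eqP gc].
  by case/imsetP: ng; exists c.
- rewrite -(af_sum ellD) /u.
  rewrite -(part _ (fun c gg => bits pos c + bits pos (e gg))) F1.
  exact: (af0 ellD).
- move=> j jh qj; have [jj <-] := jsP jh qj.
  rewrite -[RHS](F2 jj).
  rewrite (eq_bigr (fun gg => \sum_(c in I | grp g c == gg)
      (ell (bits pos c) * al gg ^+ js jj + ell (bits pos (e gg)) * al gg ^+ js jj)));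
    last first.
    move=> gg' _; rewrite /u (af_sum ellD) mulr_suml; apply: eq_bigr => c _.
    by rewrite ellD mulrDl.
  rewrite -(part _ (fun c gg => ell (bits pos c) * al gg ^+ js jj +
                               ell (bits pos (e gg)) * al gg ^+ js jj)).
  by apply: eq_bigr => c _; rewrite /yK ge.
Qed.

End VCK.

Section VC0.
Variables (k h l r : nat) (g : 'I_(k + h) -> 'I_l) (pos : 'I_(k + h) -> 'I_r).
Hypothesis posinj : forall i i', g i = g i' -> pos i = pos i' -> i = i'.
Hypothesis l1 : (l <= 1)%N.

Lemma VC_0 (I : {set coord k h l}) (e : 'I_l -> coord k h l) :
  I != set0 -> (#|I| <= h)%N -> (forall j, e j \in local_group g j) ->
  (forall j, e j \notin I) ->
  \sum_(c in I) (bits pos c + bits pos (e (grp g c))) != 0.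
Proof.
move=> I0 Ih eL eI.
have [gg ugg] := bits_lemma posinj I0 eL eI.
have all_eq (a b : 'I_l) : a = b.
  apply/val_inj => /=; have := ltn_ord a; have := ltn_ord b; move: l1; lia.
apply: contra ugg => /eqP H; apply/eqP; rewrite -[RHS]H.
rewrite [RHS](bigID (fun c => grp g c == gg)) /= [X in _ = _ + X]big1 ?addr0.
  by apply: eq_bigr => c /andP [_ /eqP ->].
by move=> c /andP [_]; rewrite (all_eq (grp g c) gg) eqxx.
Qed.
End VC0.

End Helpers.
Import Helpers.
Import Helpers.P4m.


Theorem theorem15 (k r h m : nat) :
  (0 < k)%N -> (0 < r)%N -> (0 < h)%N -> (r %| k + h)%N ->
  (* m is the smallest (nonnegative) integer with r | m and l <= 2^m *)
  (r %| m)%N -> ((k + h) %/ r <= 2 ^ m)%N ->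
  (forall m' : nat, (r %| m')%N -> ((k + h) %/ r <= 2 ^ m')%N -> (m <= m')%N) ->
  forall F : finFieldType,
    #|F| = (2 ^ (r + m * ceil_div ((h - 1) * (2 ^ r - 1)) (2 ^ r)))%N ->
    exists (A : 'M[F]_(k, h)) (g : 'I_(k + h) -> 'I_((k + h) %/ r)),
      groups_of_size r g /\ max_recoverable A g.
Proof.
move=> k0 r0 h0 rkh rm lm _ F cF.
set l := ((k + h) %/ r)%N in lm *.
set d := ceil_div ((h - 1) * (2 ^ r - 1)) (2 ^ r) in cF.
have ch : (2 \in [pchar F])%N by apply: (card_finPcharP cF).
have lE : (l * r = k + h)%N by rewrite divnK.
have glt (i : 'I_(k + h)) : (i %/ r < l)%N.
  by rewrite ltn_divLR // lE.
pose g (i : 'I_(k + h)) : 'I_l := Ordinal (glt i).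
pose pos (i : 'I_(k + h)) : 'I_r := Ordinal (ltn_pmod i r0).
have posinj i i' : g i = g i' -> pos i = pos i' -> i = i'.
  move=> [] e1 [] e2; apply/val_inj => /=.
  by rewrite (divn_eq i r) (divn_eq i' r) e1 e2.
have gs : groups_of_size r g.
  move=> j.
  have flt (p : 'I_r) : (j * r + p < k + h)%N.
    have := ltn_ord j; have := ltn_ord p; rewrite -lE; nia.
  pose f (p : 'I_r) : 'I_(k + h) := Ordinal (flt p).
  have fv (p : 'I_r) : val (f p) = (j * r + p)%N by [].
  have -> : [set i | g i == j] = f @: setT.
    apply/setP => i; rewrite inE; apply/eqP/imsetP.
      move=> gij; exists (pos i) => //; apply/val_inj; rewrite fv /=.
      have -> : (j : nat) = (i %/ r)%N by rewrite -gij.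
      exact: divn_eq.
    move=> [p _ ->]; apply/val_inj => /=.
    by rewrite divnMDl // divn_small // addn0.
  rewrite card_imset ?cardsT ?card_ord //.
  by move=> a b /(congr1 val); rewrite !fv => /addnI /val_inj.
case: (posnP m) => [m0 | mpos].
  have l1 : (l <= 1)%N by move: lm; rewrite m0.
  have cF' : #|F| = (2 ^ r)%N by rewrite cF m0 mul0n addn0.
  have [Th [Thinj ThD]] := embedF cF'.
  pose beta i := Th (bits pos (inl i : coord k h l)).
  have dp : DP g beta.
    apply: (DP_design ch Thinj ThD (v := bits pos)) => //.
    exact: VC_0 posinj l1.
  by exists (Am beta), g; split => //; exact: (MR ch dp).
have [K chK cK] := @pPrimePowerField 2 m (erefl true) mpos.
have [ell [ellinj ellD ellfix]] := ell_exists r0 rm cK.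
have [kap [kapinj kapD]] := embedK cK.
have lK : (l <= size (enum K))%N by rewrite -cardE cK.
pose al (gg : 'I_l) : K := nth 0 (enum K) gg.
have alinj : injective al.
  move=> a b /eqP; rewrite /al nth_uniq ?enum_uniq //; last 2 first.
  - exact: leq_trans (ltn_ord a) lK.
  - exact: leq_trans (ltn_ord b) lK.
  by move/eqP/val_inj.
pose Jl := [seq j <- iota 1 (h - 1) | ~~ (2 ^ r %| j)%N].
have sJ : (size Jl <= d)%N.
  rewrite size_filter count_ndvd ?expn_gt0 //.
  by rewrite /d; apply: count_le_ceil; rewrite expn_gt0.
pose js (jj : 'I_d) : nat := nth 0%N Jl jj.
have jsP j : (0 < j < h)%N -> ~~ (2 ^ r %| j)%N -> exists jj, js jj = j.
  move=> /andP [j0 jh] nq.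
  have jJ : j \in Jl by rewrite mem_filter nq mem_iota; apply/andP; split; lia.
  have il : (index j Jl < d)%N by apply: leq_trans sJ; rewrite index_mem.
  by exists (Ordinal il); rewrite /js /= nth_index.
have cF' : #|F| = (2 ^ (r + d * m))%N by rewrite cF mulnC.
have [Th [Thinj ThD]] := embedF cF'.
pose beta i := Th (vK g pos ell al kap js (inl i : coord k h l)).
have dp : DP g beta.
  apply: (DP_design ch Thinj ThD (v := vK g pos ell al kap js)).
    by move=> j; apply: vK_inr.
  by move=> I e; apply: (VC_K posinj r0 chK ellinj ellD ellfix alinj kapinj kapD jsP).
by exists (Am beta), g; split => //; exact: (MR ch dp).
Qed.
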